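(* Let $a,b\in\mathbb{Z}$ with $\gcd(a,b)=1$. Then $\{G_n(a,b)\}$ is complete mod $3^j$ for every integer $j\ge 1$.
   Context: For integers $a,b$ with $\gcd(a,b)=1$, the Gibonacci sequence $\{G_n(a,b)\}_{n\ge1}$ is defined by $G_1=a$, $G_2=b$, $G_{n+1}=G_{n-1}+G_n$. A sequence is complete mod $m$ if every residue class modulo $m$ contains some term of the sequence. *)

(* Defs.v *)
From HB Require Import structures.
From mathcomp Require Import all_boot all_order all_algebra.
Set Implicit Arguments. Unset Strict Implicit. Unset Printing Implicit Defensive.
Import Order.TTheory GRing.Theory Num.Theory.
Local Open Scope ring_scope.

(* gib_aux a b k = (G_{k+1}, G_{k+2}) *)
Fixpoint gib_aux (a b : int) (k : nat) : int * int :=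
  match k with
  | O => (a, b)
  | S k' => let p := gib_aux a b k' in (p.2, p.1 + p.2)
  end.

(* Gibonacci sequence, 1-indexed: G a b 1 = a, G a b 2 = b,
   G a b (n+1) = G a b (n-1) + G a b n. (G a b 0 is a junk value, = a.) *)
Definition G (a b : int) (n : nat) : int := (gib_aux a b n.-1).1.

Definition complete_mod (s : nat -> int) (m : int) : Prop :=
  forall r : int, exists n : nat, (1 <= n)%N /\ (s n = r %[mod m])%Z.

Lemma G_1 a b : G a b 1 = a. Proof. by []. Qed.
Lemma G_2 a b : G a b 2 = b. Proof. by []. Qed.
Lemma G_rec a b n : (1 <= n)%N -> G a b n.+2 = G a b n + G a b n.+1.
Proof. by case: n. Qed.

(* Main.v *)
Require Import Defs.
From HB Require Import structures.
From mathcomp Require Import all_boot all_order all_algebra.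
From mathcomp Require Import zify ring.
Import Order.TTheory GRing.Theory Num.Theory.
Local Open Scope ring_scope.

Definition recs (s : nat -> int) := forall n, s n.+2 = s n + s n.+1.

Definition PP (k : nat) : nat := (8 * 3 ^ k)%N.
Definition QQ (k : nat) : int := Posz (3 ^ k)%N.

Lemma QQS k : QQ k.+1 = 3 * QQ k.
Proof. by rewrite /QQ expnS PoszM. Qed.

Lemma QQ_gt0 k : 0 < QQ k.
Proof. by rewrite /QQ ltz_nat expn_gt0. Qed.

Lemma PPS k : PP k.+1 = (PP k + PP k + PP k)%N.
Proof. rewrite /PP expnS; lia. Qed.

Lemma div_rec (s : nat -> int) (p : nat) (q : int) :
  recs s -> q != 0 -> (forall n, (q %| s (n + p)%N - s n)%Z) ->
  recs (fun n => ((s (n + p)%N - s n) %/ q)%Z) /\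
  (forall n, s (n + p)%N - s n = ((s (n + p)%N - s n) %/ q)%Z * q).
Proof.
move=> Hs q0 Hd; split; last by move=> n; rewrite divzK.
move=> n /=; apply: (mulIf q0).
rewrite mulrDl !divzK // (_ : (n.+2 + p = (n + p).+2)%N) ?Hs; last lia.
rewrite (_ : (n.+1 + p = (n + p).+1)%N); last lia.
ring.
Qed.

Definition Cprop k := forall s, recs s -> forall n, exists e : int,
  s (n + PP k)%N - s n - 3 * QQ k * s n.+2 = e * (9 * QQ k).

Lemma C0 : Cprop 0.
Proof.
move=> s Hs n; rewrite /PP /QQ /= (_ : (n + 8 = n.+4.+4)%N); last lia.
rewrite !Hs; exists (s n + 2 * s n.+1); ring.
Qed.

Lemma Cstep k : Cprop k -> Cprop k.+1.
Proof.
move=> IH s Hs n.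
set q := QQ k; set P := PP k.
have q0 : 3 * q != 0 by have := QQ_gt0 k; rewrite -/q; lia.
have Ds : forall m, (3 * q %| s (m + P)%N - s m)%Z.
  move=> m; have [e He] := IH s Hs m; apply/dvdzP.
  exists (s m.+2 + 3 * e); rewrite -/P -/q in He; lia.
have [Hu Eu] := div_rec _ _ _ Hs q0 Ds.
set u := (fun n => _) in Hu Eu.
have Du : forall m, (3 * q %| u (m + P)%N - u m)%Z.
  move=> m; have [e He] := IH u Hu m; apply/dvdzP.
  exists (u m.+2 + 3 * e); rewrite -/P -/q in He; lia.
have [Hw Ew] := div_rec _ _ _ Hu q0 Du.
set w := (fun n => _) in Hw Ew.
have [e1 He1] := IH s Hs n.
have [e2 He2] := IH w Hw n.
rewrite -/P -/q in He1 He2.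
have h1 : s (n + P)%N - s n = u n * (3 * q) := Eu n.
have h2 : s (n + P + P)%N - s (n + P)%N = u (n + P)%N * (3 * q) := Eu (n + P)%N.
have h3 : s (n + P + P + P)%N - s (n + P + P)%N = u (n + P + P)%N * (3 * q)
  := Eu (n + P + P)%N.
have h4 : u (n + P)%N - u n = w n * (3 * q) := Ew n.
have h5 : u (n + P + P)%N - u (n + P)%N = w (n + P)%N * (3 * q) := Ew (n + P)%N.
have hun : u n = s n.+2 + 3 * e1.
  apply: (mulIf q0); rewrite -h1; lia.
have -> : (n + PP k.+1 = n + P + P + P)%N by rewrite PPS /P; lia.
rewrite QQS -/q.
exists (e1 + q * w n + q * q * w n.+2 + 3 * q * q * e2).
have E1 : s (n + P + P + P)%N = s n + 3 * q * (u n + u (n + P)%N + u (n + P + P)%N).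
  lia.
have E2 : u (n + P + P)%N = u n + 3 * q * (w n + w (n + P)%N) by lia.
have E3 : u (n + P)%N = u n + 3 * q * w n by lia.
have E4 : w (n + P)%N = w n + 3 * q * w n.+2 + e2 * (9 * q) by lia.
rewrite E1 E2 E3 E4 hun. ring.
Qed.

Lemma Call k : Cprop k.
Proof. elim: k => [|k IH]; [exact: C0 | exact: Cstep]. Qed.

Lemma per k s : recs s -> forall m i, exists e : int,
  s (m + i * PP k)%N - s m = e * (3 * QQ k).
Proof.
move=> Hs m; elim=> [|i [e He]]; first by exists 0; rewrite mul0n addn0; ring.
have [e1 He1] := Call k s Hs (m + i * PP k)%N.
exists (e + s (m + i * PP k).+2 + 3 * e1).
rewrite (_ : (m + i.+1 * PP k = m + i * PP k + PP k)%N); last by rewrite mulSn; lia.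
lia.
Qed.

Lemma lift k s : recs s -> forall n i, exists e : int,
  s (n + i * PP k)%N - s n - (Posz i) * (3 * QQ k) * s n.+2 = e * (9 * QQ k).
Proof.
move=> Hs n; elim=> [|i [e He]]; first by exists 0; rewrite mul0n addn0; ring.
have [e1 He1] := Call k s Hs (n + i * PP k)%N.
have [e2 He2] := per k s Hs n.+2 i.
rewrite (_ : (n.+2 + i * PP k = (n + i * PP k).+2)%N) in He2; last lia.
exists (e + e1 + QQ k * e2).
rewrite (_ : (n + i.+1 * PP k = n + i * PP k + PP k)%N); last by rewrite mulSn; lia.
have -> : Posz i.+1 = Posz i + 1 by lia.
have E : s (n + i * PP k).+2 = s n.+2 + e2 * (3 * QQ k) by lia.
rewrite E in He1.
have E1 : s (n + i * PP k + PP k)%N =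
   s (n + i * PP k)%N + 3 * QQ k * (s n.+2 + e2 * (3 * QQ k)) + e1 * (9 * QQ k) by lia.
have E2 : s (n + i * PP k)%N = s n + Posz i * (3 * QQ k) * s n.+2 + e * (9 * QQ k) by lia.
rewrite E1 E2; ring.
Qed.

Lemma Kstep k s : recs s -> forall r, 
  (exists n, (3 * QQ k %| s n - r)%Z /\ ~~ (3 %| s n.+2)%Z) ->
  exists n, (3 * QQ k.+1 %| s n - r)%Z /\ ~~ (3 %| s n.+2)%Z.
Proof.
move=> Hs r [n [/dvdzP [q0 Hq0] h3]].
have : (3 %| q0)%Z \/ (3 %| q0 + s n.+2)%Z \/ (3 %| q0 + 2 * s n.+2)%Z by lia.
have key : forall i : nat, (3 %| q0 + Posz i * s n.+2)%Z ->
  exists n, (3 * QQ k.+1 %| s n - r)%Z /\ ~~ (3 %| s n.+2)%Z.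
  move=> i /dvdzP [f Hf].
  have [e He] := lift k s Hs n i.
  have [e2 He2] := per k s Hs n.+2 i.
  rewrite (_ : (n.+2 + i * PP k = (n + i * PP k).+2)%N) in He2; last lia.
  exists (n + i * PP k)%N; split.
    apply/dvdzP; exists (f + e); rewrite QQS.
    have E : s (n + i * PP k)%N = s n + Posz i * (3 * QQ k) * s n.+2 + e * (9 * QQ k) by lia.
    have E' : s n = r + q0 * (3 * QQ k) by lia.
    have E'' : q0 = f * 3 - Posz i * s n.+2 by lia.
    rewrite E E' E''; ring.
  have E : s (n + i * PP k).+2 = s n.+2 + 3 * (e2 * QQ k) by lia.
  rewrite E; move: h3; set t := e2 * QQ k; lia.
case=> [H|[H|H]]; [apply: (key 0%N) | apply: (key 1%N) | apply: (key 2%N)]; lia.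
Qed.

Ltac pick := first [ left; split; lia | right; pick | split; lia ].

Theorem mainTheorem9 (a b : int) (hab : gcdz a b = 1%N) (j : nat) (hj : (1 <= j)%N) :
  complete_mod (G a b) (3 ^ j)%N.
Proof.
set s := fun n => G a b n.+1.
have Hs : recs s by move=> n; rewrite /s G_rec.
have K : forall k r, exists n, (3 * QQ k %| s n - r)%Z /\ ~~ (3 %| s n.+2)%Z.
  elim=> [|k IH] r; last exact: Kstep.
  have ng : ~~ ((3 %| a)%Z && (3 %| b)%Z) by rewrite -dvdz_gcd hab.
  rewrite /QQ expn0 mulr1.
  suff : ((3 %| s 0%N - r)%Z /\ ~~ (3 %| s 2%N)%Z) \/
    ((3 %| s 1%N - r)%Z /\ ~~ (3 %| s 3%N)%Z) \/
    ((3 %| s 2%N - r)%Z /\ ~~ (3 %| s 4%N)%Z) \/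
    ((3 %| s 3%N - r)%Z /\ ~~ (3 %| s 5%N)%Z) \/
    ((3 %| s 4%N - r)%Z /\ ~~ (3 %| s 6%N)%Z) \/
    ((3 %| s 5%N - r)%Z /\ ~~ (3 %| s 7%N)%Z) \/
    ((3 %| s 6%N - r)%Z /\ ~~ (3 %| s 8%N)%Z) \/
    ((3 %| s 7%N - r)%Z /\ ~~ (3 %| s 9%N)%Z).
    by do 7 (case; first by move=> H; eexists; exact: H); move=> H; eexists; exact: H.
    { rewrite /s /G /=.
    have [hr|[hr|hr]] : (3 %| r)%Z \/ (3 %| r - 1)%Z \/ (3 %| r - 2)%Z by lia.
    all: have [ha|[ha|ha]] : (3 %| a)%Z \/ (3 %| a - 1)%Z \/ (3 %| a - 2)%Z by lia.
    all: have [hb|[hb|hb]] : (3 %| b)%Z \/ (3 %| b - 1)%Z \/ (3 %| b - 2)%Z by lia.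
    all: first [ by rewrite ha hb in ng | pick ]. }
case: j hj => // k _ r.
have [n [Hn _]] := K k r.
exists n.+1; split => //.
apply/eqP; rewrite eqz_mod_dvd.
by rewrite expnS PoszM.
Qed.
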